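(* Let $\mathbb{P}$ be a product measure on $[0,\infty)^{E_H}$ with i.i.d. continuous marginals, and let $D>0$ satisfy $\mathbb{P}(\omega_e>D)\le1/5$. Call an edge $e$ open if $\omega_e\le D$. For $n\in\mathbb{N}$ let $B_n=[-n,n]\times[0,2n]$ and $A_n=B_n\setminus B_{n-\sqrt n}$. Then \[\sum_n\mathbb{P}\big(\text{there is no open half-circuit of edges in }A_n\text{ enclosing }(0,0)\big)<\infty.\]
   Context: $V_H=\{(x_1,x_2)\in\mathbb{Z}^2:x_2\ge0\}$ and $E_H$ is the set of nearest-neighbour edges with both endpoints in $V_H$. An open half-circuit is a path in $(V_H,E_H)$ whose initial and final endpoints lie on the first coordinate axis $\{(x,0):x\in\mathbb{Z}\}$ and all of whose edges are open; it encloses $(0,0)$ if $(0,0)$ lies in the bounded region between the path and the first coordinate axis. *)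

(* Defs.v *)
From HB Require Import structures.
From mathcomp Require Import all_boot all_order all_algebra.
From mathcomp Require Import all_classical all_reals all_analysis.
Set Implicit Arguments. Unset Strict Implicit. Unset Printing Implicit Defensive.
Import Order.TTheory GRing.Theory Num.Theory.
Local Open Scope ring_scope.
Local Open Scope classical_set_scope.

Definition vertex := (int * int)%type.

(* Edges: (x, y, false) is the horizontal edge {(x,y),(x+1,y)},
          (x, y, true)  is the vertical edge   {(x,y),(x,y+1)}.
   Every nearest-neighbour edge of Z^2 has exactly one such name. *)
Definition edge := (int * int * bool)%type.

(* E_H : edges with both endpoints in V_H. *)
Definition inEH (e : edge) : bool := 0 <= e.1.2.

Definition nn (v w : vertex) : bool := `|v.1 - w.1| + `|v.2 - w.2| == 1.

Definition edge_of (v w : vertex) : edge :=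
  if v.2 == w.2 then (Order.min v.1 w.1, v.2, false)
  else (v.1, Order.min v.2 w.2, true).

Definition inB {R : realType} (r : R) (v : vertex) : bool :=
  (`|(v.1)%:~R| <= r) && (0 <= (v.2)%:~R :> R) && ((v.2)%:~R <= 2 * r).

Definition inA {R : realType} (n : nat) (v : vertex) : bool :=
  inB (n%:R : R) v && ~~ inB (n%:R - Num.sqrt (n%:R) : R) v.

(* p = [v0; ...; vk] is an open half-circuit all of whose edges (i.e. all of
   whose vertices) lie in S: a nearest-neighbour path in (V_H, E_H), all
   edges open, with both endpoints on the first coordinate axis. *)
Definition open_half_circuit_in (isopen : edge -> bool) (S : vertex -> bool)
    (p : seq vertex) : bool :=
  match p with
  | [::] => false
  | v :: q =>
      [&& all (fun u => 0 <= u.2) p,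
          path (fun a b => nn a b && isopen (edge_of a b)) v q,
          v.2 == 0, (last v q).2 == 0 & all S p]
  end.

(* p encloses (0,0): (0,0) lies in the (closure of the) bounded region
   between p and the first axis; for a path in V_H with endpoints (a,0),(b,0)
   avoiding the origin this means exactly that a and b lie on opposite
   sides of 0. *)
Definition encloses_origin (p : seq vertex) : bool :=
  match p with
  | [::] => false
  | v :: q =>
      ((0, 0) \notin p) &&
      (((v.1 < 0) && (0 < (last v q).1)) || (((last v q).1 < 0) && (0 < v.1)))
  end.

Definition mutually_independent {d} {Omega : measurableType d} {R : realType}
    (P : probability Omega R) (omega : edge -> Omega -> R) : Prop :=
  forall (s : seq edge) (B : edge -> set R),
    uniq s -> all inEH s -> (forall e, measurable (B e)) ->
    P (\big[setI/setT]_(e <- s) (omega e @^-1` B e)) =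
    (\prod_(e <- s) P (omega e @^-1` B e))%E.

Definition no_enclosing_half_circuit {Omega : Type} {R : realType}
    (omega : edge -> Omega -> R) (D : R) (n : nat) : set Omega :=
  [set w | ~ exists p : seq vertex,
      open_half_circuit_in (fun e => omega e w <= D) (@inA R n) p
      && encloses_origin p].

(* Main.v *)
Require Import Defs.
From HB Require Import structures.
From mathcomp Require Import all_boot all_order all_algebra.
From mathcomp Require Import all_classical all_reals all_analysis.
From mathcomp Require Import zify ring lra.
Import Order.TTheory GRing.Theory Num.Theory.
Local Open Scope ring_scope.

Set Implicit Arguments. Unset Strict Implicit. Unset Printing Implicit Defensive.

Lemma xor_shift (a b x y : bool) : a (+) y = x (+) b -> b = a (+) x (+) y.
Proof. by case: a; case: b; case: x; case: y. Qed.

Lemma bshift (g : nat -> bool) L :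
  \big[addb/false]_(i < L) g i.+1 = \big[addb/false]_(i < L) g i (+) g 0%N (+) g L.
Proof.
apply: xor_shift.
have e1 : \big[addb/false]_(i < L.+1) g i = g 0%N (+) \big[addb/false]_(i < L) g i.+1.
  by rewrite big_ord_recl; congr (_ (+) _); apply: eq_bigr => i _; rewrite lift0.
have e2 : \big[addb/false]_(i < L.+1) g i = \big[addb/false]_(i < L) g i (+) g L.
  by rewrite big_ord_recr.
by rewrite -e2 e1.
Qed.

Lemma btele (f : nat -> bool) L :
  \big[addb/false]_(i < L) (f i (+) f i.+1) = f 0%N (+) f L.
Proof.
elim: L => [|L IH]; first by rewrite big_ord0 addbb.
rewrite big_ord_recr /= IH.
by case: (f 0%N); case: (f L); case: (f L.+1).
Qed.

Lemma mem_pairmap (T U : eqType) (e : rel T) (f : T -> T -> U) x p z :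
  path e x p -> z \in pairmap f x p ->
  exists a b, [/\ a \in x :: p, b \in x :: p, e a b & z = f a b].
Proof.
elim: p x => [|y p IH] x //= /andP [h1 h2]; rewrite inE => /orP [/eqP ->|hz].
  by exists x, y; rewrite !inE !eqxx orbT.
have [a [b [ha hb hab ->]]] := IH y h2 hz.
by exists a, b; split => //; rewrite inE ?ha ?hb orbT.
Qed.

Lemma uniq_pairmap (T U : eqType) (e : rel T) (f : T -> T -> U) x p :
  (forall a b a' b', e a b -> e a' b' -> f a b = f a' b' ->
     (a = a' /\ b = b') \/ (a = b' /\ b = a')) ->
  path e x p -> uniq (x :: p) -> uniq (pairmap f x p).
Proof.
move=> inj; elim: p x => [|y p IH] x //= /andP [h1 h2] /andP [hx hu].
rewrite IH // andbT; apply/negP => /(mem_pairmap h2) [a [b [ha hb hab E]]].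
case: (inj _ _ _ _ h1 hab E) => [[ex _]|[ex _]].
  by move: hx; rewrite ex ha.
by move: hx; rewrite ex hb.
Qed.

Lemma all_pairmap (T U : Type) (e : rel T) (f : T -> T -> U) (P : pred U) x p :
  (forall a b, e a b -> P (f a b)) -> path e x p -> all P (pairmap f x p).
Proof.
move=> H; elim: p x => [|y p IH] x //= /andP [h1 h2].
by rewrite H // IH.
Qed.

Section Comb.
Variables (n m : nat).
Hypothesis mn : (m < n)%N.
Local Notation N := (n%:Z).
Local Notation M := (m%:Z).
Variable c : vertex -> bool.

Definition zS (v : vertex) : bool :=
  [&& -N <= v.1, v.1 <= N, 0 <= v.2, v.2 <= 2 * N &
   ~~ ((-M <= v.1) && (v.1 <= M) && (v.2 <= 2 * M))].

Hypothesis c_lf : forall u : vertex, u.2 = 0 -> -N <= u.1 <= -M - 1 -> c u.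
Hypothesis c_rf : forall u : vertex, u.2 = 0 -> M + 1 <= u.1 <= N -> ~~ c u.

Definition cutS (a b : vertex) := [&& zS a, zS b & c a (+) c b].
Definition cutl (q : vertex) := cutS q (q.1, q.2 + 1).
Definition cutb (q : vertex) := cutS q (q.1 + 1, q.2).
Definition zpi (q : vertex) :=
  cutb q (+) cutb (q.1, q.2 + 1) (+) cutl q (+) cutl (q.1 + 1, q.2).

Definition zW := (2 * n).+2.
Definition zX (i : nat) : int := i%:Z - N - 1.
Definition zY (j : nat) : int := j%:Z - 1.
Definition SR (F : vertex -> bool) :=
  \big[addb/false]_(i < zW) \big[addb/false]_(j < zW) F (zX i, zY j).

Lemma SR_ext F G : (forall q, F q = G q) -> SR F = SR G.
Proof. by move=> FG; apply: eq_bigr => i _; apply: eq_bigr => j _. Qed.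

Lemma SR_add F G : SR (fun q => F q (+) G q) = SR F (+) SR G.
Proof.
rewrite /SR -big_split /=; apply: eq_bigr => i _; by rewrite -big_split.
Qed.

Lemma cutb_low x y : y < 0 -> cutb (x, y) = false.
Proof. by move=> hy; rewrite /cutb /cutS /zS /=; apply/negP; lia. Qed.
Lemma cutb_high x y : 2 * N < y -> cutb (x, y) = false.
Proof. by move=> hy; rewrite /cutb /cutS /zS /=; apply/negP; lia. Qed.
Lemma cutl_low x y : x < - N -> cutl (x, y) = false.
Proof. by move=> hy; rewrite /cutl /cutS /zS /=; apply/negP; lia. Qed.
Lemma cutl_high x y : N < x -> cutl (x, y) = false.
Proof. by move=> hy; rewrite /cutl /cutS /zS /=; apply/negP; lia. Qed.

Lemma handshake (k : vertex -> bool) :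
  (forall q, cutl q -> k q = k (q.1 - 1, q.2)) ->
  (forall q, cutb q -> k q = k (q.1, q.2 - 1)) ->
  SR (fun q => k q && zpi q) = false.
Proof.
move=> cl cb.
have -> : SR (fun q => k q && zpi q) =
  SR (fun q => k q && cutb q) (+) SR (fun q => k q && cutb (q.1, q.2 + 1))
  (+) SR (fun q => k q && cutl q) (+) SR (fun q => k q && cutl (q.1 + 1, q.2)).
  by rewrite -!SR_add; apply: SR_ext => q; rewrite /zpi !andb_addr.
have -> : SR (fun q => k q && cutb (q.1, q.2 + 1)) = SR (fun q => k q && cutb q).
  rewrite /SR; apply: eq_bigr => i _.
  transitivity (\big[addb/false]_(j < zW)
     (fun j : nat => k (zX i, zY j) && cutb (zX i, zY j)) j.+1).
    apply: eq_bigr => j _ /=.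
    have -> : (zX i, zY j.+1) = (zX i, zY j + 1) by rewrite /zY; congr pair; lia.
    case E: (cutb (zX i, zY j + 1)); last by rewrite !andbF.
    by rewrite !andbT (cb _ E) /= addrK.
  rewrite (bshift (fun j : nat => k (zX i, zY j) && cutb (zX i, zY j))) /= /zY /zW cutb_low ?cutb_high ?andbF ?addbF //; lia.
have -> : SR (fun q => k q && cutl (q.1 + 1, q.2)) = SR (fun q => k q && cutl q).
  rewrite /SR.
  transitivity (\big[addb/false]_(i < zW)
     (fun i : nat => \big[addb/false]_(j < zW) (k (zX i, zY j) && cutl (zX i, zY j))) i.+1).
    apply: eq_bigr => i _ /=; apply: eq_bigr => j _.
    have -> : (zX i.+1, zY j) = (zX i + 1, zY j) by rewrite /zX; congr pair; lia.
    case E: (cutl (zX i + 1, zY j)); last by rewrite !andbF.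
    by rewrite !andbT (cl _ E) /= addrK.
  rewrite (bshift (fun i : nat => \big[addb/false]_(j < zW) (k (zX i, zY j) && cutl (zX i, zY j)))) /=.
  have z0 : \big[addb/false]_(j < zW) (k (zX 0, zY j) && cutl (zX 0, zY j)) = false.
    by rewrite big1 // => j _; rewrite /zX cutl_low ?andbF //; lia.
  have zW : \big[addb/false]_(j < zW) (k (zX zW, zY j) && cutl (zX zW, zY j)) = false.
    by rewrite big1 // => j _; rewrite /zX /zW cutl_high ?andbF //; lia.
  by rewrite z0 zW !addbF.
by rewrite addbb addFb addbb.
Qed.

Definition zbox (q : vertex) := [&& -N <= q.1, q.1 <= N - 1, 0 <= q.2 & q.2 <= 2 * N - 1].

Lemma zpeel (G : nat -> bool) n2 :
  \big[addb/false]_(i < n2.+2) ((0 < i)%N && (i <= n2)%N && G i) =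
  \big[addb/false]_(i < n2) G i.+1.
Proof.
rewrite big_ord_recl /= big_ord_recr /= /bump /= add1n ltnn /= addbF.
by apply: eq_bigr => i _; rewrite /bump /= add1n ltn_ord.
Qed.

Lemma cutb_foot x : cutb (x, 0) = false.
Proof.
rewrite /cutb /cutS /=; case Hz: (zS (x, 0)); case Hz': (zS (x + 1, 0)) => //=.
move: Hz Hz'; rewrite /zS /= => Hz Hz'.
have [h|h] : (x + 1 <= -M - 1) \/ (M + 1 <= x) by lia.
  by rewrite !c_lf //=; lia.
by rewrite (negbTE (c_rf _ _)) ?(negbTE (@c_rf (x + 1, 0) _ _)) //=; lia.
Qed.

Lemma cutS_c a b : zS a -> zS b -> cutS a b = c a (+) c b.
Proof. by rewrite /cutS => -> ->. Qed.

Lemma outer_sum : SR (fun q => ~~ zbox q && zpi q) = true.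
Proof.
have -> : SR (fun q => ~~ zbox q && zpi q) =
    SR (fun q => true && zpi q) (+) SR (fun q => zbox q && zpi q).
  by rewrite -SR_add; apply: SR_ext => q; case: (zbox q); case: (zpi q).
rewrite handshake // addFb.
have -> : SR (fun q => zbox q && zpi q) =
  \big[addb/false]_(i < (2 * n).+2) ((0 < i)%N && (i <= 2 * n)%N &&
    \big[addb/false]_(j < (2 * n).+2) ((0 < j)%N && (j <= 2 * n)%N && zpi (zX i, zY j))).
  apply: eq_bigr => i _.
  case Hi: ((0 < i)%N && (i <= 2 * n)%N) => /=.
    apply: eq_bigr => j _; congr (_ && _).
    rewrite /zbox /zX /zY /=; move: Hi; move: (nat_of_ord i) (nat_of_ord j) => a b Hi; apply/idP/idP => H; lia.
  by rewrite big1 // => j _; rewrite /zbox /zX /zY /=; apply/negbTE/negP; move: Hi; move: (nat_of_ord i) (nat_of_ord j) => a b; lia.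
rewrite (zpeel (fun i => \big[addb/false]_(j < (2 * n).+2) ((0 < j)%N && (j <= 2 * n)%N && zpi (zX i, zY j)))).
under eq_bigr => i _ do rewrite (zpeel (fun j => zpi (zX i.+1, zY j))).
have eX : forall i : nat, zX i.+1 + 1 = zX i.+2 by move=> i; rewrite /zX; lia.
have eY : forall j : nat, zY j.+1 + 1 = zY j.+2 by move=> j; rewrite /zY; lia.
rewrite (eq_bigr (fun i : 'I_(2*n) => \big[addb/false]_(j < 2*n)
   ((cutb (zX i.+1, zY j.+1) (+) cutb (zX i.+1, zY j.+2)) (+)
    (cutl (zX i.+1, zY j.+1) (+) cutl (zX i.+2, zY j.+1))))); last first.
  move=> i _; apply: eq_bigr => j _; rewrite /zpi /= eX eY.
  by case: cutb; case: cutb; case: cutl; case: cutl.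
under eq_bigr => i _ do rewrite big_split /=.
rewrite big_split /= [X in _ (+) X]exchange_big /=.
have t1 : forall j : nat, \big[addb/false]_(i < 2*n) (cutl (zX i.+1, zY j.+1) (+) cutl (zX i.+2, zY j.+1))
   = cutl (zX 1, zY j.+1) (+) cutl (zX (2*n).+1, zY j.+1) := fun j => btele (fun i => cutl (zX i.+1, zY j.+1)) (2*n).
have t2 : forall i : nat, \big[addb/false]_(j < 2*n) (cutb (zX i.+1, zY j.+1) (+) cutb (zX i.+1, zY j.+2))
   = cutb (zX i.+1, zY 1) (+) cutb (zX i.+1, zY (2*n).+1) := fun i => btele (fun j => cutb (zX i.+1, zY j.+1)) (2*n).
under [X in _ (+) X]eq_bigr => j _ do rewrite t1.
under [X in X (+) _]eq_bigr => i _ do rewrite t2.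
have eX1 : zX 1 = - N by rewrite /zX; lia.
have eXr : zX (2 * n).+1 = N by rewrite /zX; lia.
have eY1 : zY 1 = 0 by rewrite /zY; lia.
have eYr : zY (2 * n).+1 = 2 * N by rewrite /zY; lia.
have A1 : \big[addb/false]_(i < 2*n) (cutb (zX i.+1, zY 1) (+) cutb (zX i.+1, zY (2*n).+1))
    = c (- N, 2 * N) (+) c (N, 2 * N).
  rewrite big_split /= big1; last by move=> i _; rewrite eY1 cutb_foot.
  rewrite (eq_bigr (fun i : 'I_(2 * n) => c (zX i.+1, 2 * N) (+) c (zX i.+2, 2 * N))); last first.
    move=> i _; rewrite eYr /cutb /= eX !cutS_c // /zS /zX /=; move: (nat_of_ord i) (ltn_ord i) => a ha; lia.
  have t5 := btele (fun i => c (zX i.+1, 2 * N)) (2 * n).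
  by rewrite t5 /= eX1 eXr.
have B1 : \big[addb/false]_(j < 2*n) (cutl (zX 1, zY j.+1) (+) cutl (zX (2*n).+1, zY j.+1))
    = c (- N, 0) (+) c (- N, 2 * N) (+) (c (N, 0) (+) c (N, 2 * N)).
  rewrite (eq_bigr (fun j : 'I_(2 * n) => (c (- N, zY j.+1) (+) c (- N, zY j.+2))
     (+) (c (N, zY j.+1) (+) c (N, zY j.+2)))); last first.
    move=> j _; rewrite eX1 eXr /cutl /= eY !cutS_c // /zS /zY /=; move: (nat_of_ord j) (ltn_ord j) => a ha; lia.
  have t3 := btele (fun j => c (- N, zY j.+1)) (2 * n).
  have t4 := btele (fun j => c (N, zY j.+1)) (2 * n).
  by rewrite big_split /= t3 t4 eY1 eYr.
rewrite A1 B1.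
have h1 : c (- N, 0) by apply: c_lf => //=; lia.
have h2 : c (N, 0) = false by apply/negbTE/c_rf => //=; lia.
rewrite h1 h2.
by case: (c (- N, 2 * N)); case: (c (N, 2 * N)).
Qed.

Definition dstep (a b : vertex) : bool :=
  [|| (b == (a.1 + 1, a.2)) && cutl b, (b == (a.1 - 1, a.2)) && cutl a,
      (b == (a.1, a.2 + 1)) && cutb b | (b == (a.1, a.2 - 1)) && cutb a].

Definition zface (q : vertex) :=
  [&& zS q, zS (q.1 + 1, q.2), zS (q.1, q.2 + 1) & zS (q.1 + 1, q.2 + 1)].

Lemma face_pi q : zface q -> zpi q = false.
Proof.
case: q => x y; rewrite /zface /zpi /cutl /cutb /= => /and4P [h1 h2 h3 h4].
rewrite !cutS_c //.
by case: (c (x, y)); case: (c (x + 1, y)); case: (c (x, y + 1)); case: (c (x + 1, y + 1)).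
Qed.

Lemma dstep_symI a b : dstep a b -> dstep b a.
Proof.
case: a => x y; case/or4P => /andP [/eqP -> h]; apply/or4P.
- by constructor 2; rewrite /= addrK eqxx.
- by constructor 1; rewrite /= subrK eqxx.
- by constructor 4; rewrite /= addrK eqxx.
- by constructor 3; rewrite /= subrK eqxx.
Qed.

Lemma dstep_sym a b : dstep a b = dstep b a.
Proof. by apply/idP/idP; apply: dstep_symI. Qed.

Lemma exists_dual : exists q0 p, ~~ zbox q0 /\ path dstep q0 p /\
  zbox (last q0 p) /\ ~~ zface (last q0 p).
Proof.
apply: contrapT => H.
pose k q := `[< exists q0 p, ~~ zbox q0 /\ path dstep q0 p /\ last q0 p = q >].
have kstep : forall a b, dstep a b -> k a -> k b.
  move=> a b hab /asboolP [q0 [p [h1 [h2 h3]]]]; apply/asboolP.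
  by exists q0, (rcons p b); rewrite rcons_path last_rcons h3 hab h2.
have ksym : forall a b, dstep a b -> k a = k b.
  by move=> a b hab; apply/idP/idP; apply: kstep => //; rewrite dstep_sym.
have cl : forall q, cutl q -> k q = k (q.1 - 1, q.2).
  by move=> q hq; apply: ksym; apply/or4P; constructor 2; rewrite eqxx.
have cb : forall q, cutb q -> k q = k (q.1, q.2 - 1).
  by move=> q hq; apply: ksym; apply/or4P; constructor 4; rewrite eqxx.
have := @handshake k cl cb.
have -> : SR (fun q => k q && zpi q) = SR (fun q => ~~ zbox q && zpi q); last by rewrite outer_sum.
apply: SR_ext => q; case Hb: (zbox q) => /=; last first.
  by have -> : k q by apply/asboolP; exists q, [::]; rewrite Hb.
case Hf: (zface q); first by rewrite face_pi // andbF.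
have -> // : k q = false.
apply/negbTE/negP => /asboolP [q0 [p [h1 [h2 h3]]]].
by apply: H; exists q0, p; rewrite h3 Hb Hf.
Qed.

Lemma dstep_lip a b : dstep a b ->
  [/\ b.1 <= a.1 + 1, a.1 <= b.1 + 1, b.2 <= a.2 + 1 & a.2 <= b.2 + 1].
Proof. by case/or4P => /andP [/eqP -> _] /=; split; lia. Qed.

Lemma path_lip (f : vertex -> int) :
  (forall a b, dstep a b -> f b <= f a + 1) ->
  forall q0 p, path dstep q0 p -> f (last q0 p) <= f q0 + (size p)%:Z.
Proof.
move=> H q0 p; elim: p q0 => [|b p IH] q0 /=; first by lia.
move=> /andP [h1 h2]; have := IH b h2; have := H _ _ h1; lia.
Qed.

Lemma not_bottom q0 q1 : ~~ zbox q0 -> dstep q0 q1 ->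
  (q0.1 + N + 1 <= 0) \/ (N - q0.1 <= 0) \/ (2 * N - q0.2 <= 0).
Proof.
case: q0 => x y; rewrite /zbox /= => hb.
case/or4P => /andP [/eqP E h]; subst q1.
- by move: h; rewrite /cutl /cutS /zS /= => /and3P [z1 z2 _]; lia.
- by move: h; rewrite /cutl /cutS /zS /= => /and3P [z1 z2 _]; lia.
- case Ey: (y + 1 == 0); first by move/eqP: Ey h => ->; rewrite cutb_foot.
  by move: h; rewrite /cutb /cutS /zS /= => /and3P [z1 z2 _]; lia.
- by move: h; rewrite /cutb /cutS /zS /= => /and3P [z1 z2 _]; lia.
Qed.

Lemma inner_far q : zbox q -> ~~ zface q ->
  [/\ (n - m)%:Z <= q.1 + N + 1, (n - m)%:Z <= N - q.1 & (n - m)%:Z <= 2 * N - q.2].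
Proof. by case: q => x y; rewrite /zbox /zface /zS /= => h1 h2; split; lia. Qed.

Lemma dual_length q0 p : ~~ zbox q0 -> path dstep q0 p -> zbox (last q0 p) ->
  ~~ zface (last q0 p) -> (n - m <= size p)%N.
Proof.
case: p => [|q1 p] /=; first by move=> /negbTE ->.
move=> hb /andP [h1 h2] hl hf.
have [A B C] := inner_far hl hf.
have hp : path dstep q0 (q1 :: p) by rewrite /= h1.
have L1 := @path_lip (fun q => q.1 + N + 1)
  (fun a b h => let: And4 u1 u2 u3 u4 := dstep_lip h in ltac:(lia)) q0 _ hp.
have L2 := @path_lip (fun q => N - q.1)
  (fun a b h => let: And4 u1 u2 u3 u4 := dstep_lip h in ltac:(lia)) q0 _ hp.
have L3 := @path_lip (fun q => 2 * N - q.2)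
  (fun a b h => let: And4 u1 u2 u3 u4 := dstep_lip h in ltac:(lia)) q0 _ hp.
move: L1 L2 L3 => /= L1 L2 L3.
have := not_bottom hb h1; lia.
Qed.

Definition zR (q : vertex) := [&& -N - 1 <= q.1, q.1 <= N, -1 <= q.2 & q.2 <= 2 * N].

Lemma dstep_R a b : dstep a b -> zR a && zR b.
Proof.
case: a => x y; case/or4P => /andP [/eqP -> h]; move: h;
  rewrite /zR /cutl /cutb /cutS /zS /= => /and3P [z1 z2 _]; lia.
Qed.

Lemma path_R q0 p : path dstep q0 p -> all zR p.
Proof.
elim: p q0 => [|b p IH] q0 //= /andP [h1 h2].
by rewrite (IH _ h2) andbT; case/andP: (dstep_R h1).
Qed.

Definition Rlist : seq vertex := [seq (zX i, zY j) | i <- iota 0 zW, j <- iota 0 zW].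

Lemma mem_Rlist q : zR q -> q \in Rlist.
Proof.
case: q => x y; rewrite /zR /= => h.
have -> : (x, y) = (zX (absz (x + N + 1)), zY (absz (y + 1))) by rewrite /zX /zY; congr pair; lia.
by apply: allpairs_f; rewrite mem_iota /zW; lia.
Qed.

Lemma size_Rlist : size Rlist = (zW * zW)%N.
Proof. by rewrite size_allpairs size_iota. Qed.

Lemma size_bound q0 p : path dstep q0 p -> p != [::] -> uniq (q0 :: p) ->
  (size (q0 :: p) <= zW * zW)%N.
Proof.
move=> hp hne hu; rewrite -size_Rlist; apply: uniq_leq_size => // q.
rewrite inE => /orP [/eqP ->|hq].
  by case: p hp hne {hu} => // b p /= /andP [h _] _; apply: mem_Rlist; case/andP: (dstep_R h).
by apply: mem_Rlist; move/allP: (path_R hp); apply.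
Qed.

Definition zde (a b : vertex) : edge :=
  if b.1 == a.1 + 1 then (a.1 + 1, a.2, true)
  else if b.1 == a.1 - 1 then (a.1, a.2, true)
  else if b.2 == a.2 + 1 then (a.1, a.2 + 1, false)
  else (a.1, a.2, false).

Definition zsd (e : edge) : vertex * vertex :=
  if e.2 then ((e.1.1 - 1, e.1.2), (e.1.1, e.1.2))
  else ((e.1.1, e.1.2 - 1), (e.1.1, e.1.2)).

Lemma de_sd a b : dstep a b -> zsd (zde a b) = (a, b) \/ zsd (zde a b) = (b, a).
Proof.
case: a => x y; case/or4P => /andP [/eqP -> _]; rewrite /zde /zsd /=.
- by rewrite eqxx /= addrK; left.
- have -> : (x - 1 == x + 1) = false by lia.
  by rewrite eqxx /=; right.
- have -> : (x == x + 1) = false by lia.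
  have -> : (x == x - 1) = false by lia.
  by rewrite eqxx /= addrK; left.
- have -> : (x == x + 1) = false by lia.
  have -> : (x == x - 1) = false by lia.
  have -> : (y - 1 == y + 1) = false by lia.
  by right.
Qed.

Lemma de_inj a b a' b' : dstep a b -> dstep a' b' -> zde a b = zde a' b' ->
  (a = a' /\ b = b') \/ (a = b' /\ b = a').
Proof.
move=> h h' e; case: (de_sd h) => E; case: (de_sd h') => E'; rewrite e E' in E;
  case: E => -> ->; by [left | right].
Qed.

Definition zstep (q : vertex) (d : nat) : vertex :=
  if d == 0%N then (q.1 + 1, q.2) else if d == 1%N then (q.1 - 1, q.2)
  else if d == 2%N then (q.1, q.2 + 1) else (q.1, q.2 - 1).

Definition zdir (a b : vertex) : nat :=
  if b.1 == a.1 + 1 then 0%N else if b.1 == a.1 - 1 then 1%N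
  else if b.2 == a.2 + 1 then 2%N else 3%N.

Lemma step_dir a b : dstep a b -> zstep a (zdir a b) = b.
Proof.
case: a => x y; case/or4P => /andP [/eqP -> _]; rewrite /zdir /zstep /=.
- by rewrite eqxx.
- have -> : (x - 1 == x + 1) = false by lia.
  by rewrite eqxx.
- have -> : (x == x + 1) = false by lia.
  have -> : (x == x - 1) = false by lia.
  by rewrite eqxx.
- have -> : (x == x + 1) = false by lia.
  have -> : (x == x - 1) = false by lia.
  by have -> : (y - 1 == y + 1) = false by lia.
Qed.

Lemma dir_lt4 a b : (zdir a b < 4)%N.
Proof. by rewrite /zdir; repeat case: ifP. Qed.

Lemma zwalk q0 p : path dstep q0 p -> scanl zstep q0 (pairmap zdir q0 p) = p.
Proof.
elim: p q0 => [|b p IH] q0 //= /andP [h1 h2].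
by rewrite step_dir // IH.
Qed.

Variable opE : edge -> bool.
Hypothesis c_op : forall u v, zS u -> zS v -> nn u v -> opE (edge_of u v) -> c u = c v.

Lemma cut_closed u v : cutS u v -> nn u v -> ~~ opE (edge_of u v).
Proof.
case/and3P => zu zv hc hn; apply/negP => ho.
by move: hc; rewrite (c_op zu zv hn ho) addbb.
Qed.

Lemma eo_v x y : edge_of (x, y) (x, y + 1) = (x, y, true).
Proof.
rewrite /edge_of /=; have -> : (y == y + 1) = false by lia.
by have -> : Order.min y (y + 1) = y by lia.
Qed.

Lemma eo_h x y : edge_of (x, y) (x + 1, y) = (x, y, false).
Proof. by rewrite /edge_of /= eqxx; have -> : Order.min x (x + 1) = x by lia. Qed.

Lemma nn_v x y : nn (x, y) (x, y + 1). Proof. rewrite /nn /=; lia. Qed.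
Lemma nn_h x y : nn (x, y) (x + 1, y). Proof. rewrite /nn /=; lia. Qed.

Lemma de_closed a b : dstep a b -> (0 <= (zde a b).1.2) && ~~ opE (zde a b).
Proof.
case: a => x y; case/or4P => /andP [/eqP -> h]; rewrite /zde /=.
- rewrite eqxx /=; have := cut_closed h (nn_v _ _); rewrite /= eo_v => ->.
  by move: h; rewrite /cutl /cutS /zS /= => /and3P [z1 z2 _]; rewrite andbT; lia.
- have -> : (x - 1 == x + 1) = false by lia.
  rewrite eqxx /=; have := cut_closed h (nn_v _ _); rewrite /= eo_v => ->.
  by move: h; rewrite /cutl /cutS /zS /= => /and3P [z1 z2 _]; rewrite andbT; lia.
- have -> : (x == x + 1) = false by lia.
  have -> : (x == x - 1) = false by lia.
  rewrite eqxx /=; have := cut_closed h (nn_h _ _); rewrite /= eo_h => ->.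
  by move: h; rewrite /cutb /cutS /zS /= => /and3P [z1 z2 _]; rewrite andbT; lia.
- have -> : (x == x + 1) = false by lia.
  have -> : (x == x - 1) = false by lia.
  have -> : (y - 1 == y + 1) = false by lia.
  have := cut_closed h (nn_h _ _); rewrite /= eo_h => ->.
  by move: h; rewrite /cutb /cutS /zS /= => /and3P [z1 z2 _]; rewrite andbT; lia.
Qed.

Definition zes q0 ds := pairmap zde q0 (scanl zstep q0 ds).

Theorem comb_main : exists q0 ds, [/\ q0 \in Rlist, (n - m <= size ds)%N,
  (size ds < zW * zW)%N, all (fun d => d < 4)%N ds &
  uniq (zes q0 ds) && all (fun e => (0 <= e.1.2) && ~~ opE e) (zes q0 ds)].
Proof.
have [q0 [p [hb [hp [hl hf]]]]] := exists_dual.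
move: hl hf; case: (shortenP hp) => p' hp' hu _ hl hf.
have hne : p' != [::] by case: p' hp' hu hl hf => //=; rewrite (negbTE hb).
exists q0, (pairmap zdir q0 p'); rewrite /zes zwalk // size_pairmap; split.
- case: p' hp' hne {hu hl hf} => // b p2 /= /andP [h _] _; apply: mem_Rlist.
  by case/andP: (dstep_R h).
- exact: dual_length hb hp' hl hf.
- by have := size_bound hp' hne hu.
- by apply: (all_pairmap (e := dstep)) => // a b _; apply: dir_lt4.
- apply/andP; split; first by apply: uniq_pairmap hp' hu => a b a' b'; apply: de_inj.
  by apply: all_pairmap hp' => a b; apply: de_closed.
Qed.

End Comb.

Fixpoint isqrt (n : nat) : nat :=
  if n is n'.+1 then
    (let r := isqrt n' in if (r.+1 * r.+1 <= n'.+1)%N then r.+1 else r)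
  else 0%N.

Lemma isqrt_spec n : (isqrt n * isqrt n <= n < (isqrt n).+1 * (isqrt n).+1)%N.
Proof.
elim: n => [|n IH] //=; case: ifP => h; nia.
Qed.

Lemma isqrt_pos n : (1 <= n)%N -> (1 <= isqrt n)%N.
Proof. have := isqrt_spec n; nia. Qed.

Lemma isqrt_le n : (isqrt n <= n)%N.
Proof. have := isqrt_spec n; nia. Qed.

Lemma castle (R : realType) (a b : int) : a <= b -> (a%:~R : R) <= b%:~R.
Proof. by rewrite ler_int. Qed.

Lemma zS_inA (R : realType) n v : (1 <= n)%N -> zS n (n - isqrt n) v -> @inA R n v.
Proof.
move=> hn; case: v => x y; rewrite /zS /inA /inB /= => hz.
have hs := isqrt_spec n; have hle := isqrt_le n.
set r := isqrt n in hs hle hz *.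
have hX1 : (x%:~R : R) <= n%:R by have := @castle R x n%:Z ltac:(lia).
have hX0 : - (n%:R) <= (x%:~R : R) by have := @castle R (- n%:Z) x ltac:(lia); rewrite intrN.
have hY0 : 0 <= (y%:~R : R) by have := @castle R 0 y ltac:(lia).
have hY1 : (y%:~R : R) <= 2 * n%:R.
  by have := @castle R y (2 * n%:Z) ltac:(lia); rewrite intrM.
have hd : [\/ (x%:~R : R) <= - (n%:R - r%:R) - 1, n%:R - r%:R + 1 <= (x%:~R : R) |
    2 * (n%:R - r%:R) + 1 <= (y%:~R : R)].
  have [h|[h|h]] : (x <= - (n%:Z - r%:Z) - 1) \/ (n%:Z - r%:Z + 1 <= x) \/ (2 * (n%:Z - r%:Z) + 1 <= y) by lia.
  - by apply: Or31; have := @castle R _ _ h; rewrite intrB intrN intrB.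
  - by apply: Or32; have := @castle R _ _ h; rewrite intrD intrB.
  - by apply: Or33; have := @castle R _ _ h; rewrite intrD intrM intrB.
rewrite !ler_norml hX1 hX0 hY0 hY1 /=.
apply/negP => /andP [/andP [/andP [h0 h1] _] h2].
have h0' : - (n%:R - Num.sqrt (n%:R : R)) <= (x%:~R : R) := h0.
have h1' : (x%:~R : R) <= n%:R - Num.sqrt (n%:R : R) := h1.
have h2' : (y%:~R : R) <= 2 * (n%:R - Num.sqrt (n%:R : R)) := h2.
have hr : (r%:R : R) <= Num.sqrt (n%:R : R).
  rewrite -(ger0_norm (ler0n R r)) -sqrtr_sqr; apply: ler_wsqrtr.
  by rewrite -natrX ler_nat; nia.
clear h0 h1 h2; case: hd => hd; move: h0' h1' h2' hr hd; clear; move: (x%:~R : R) (y%:~R : R) (r%:R : R) (n%:R : R) (Num.sqrt (n%:R : R)) => X Y rr nr ss; lra.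
Qed.

Lemma nn_sym (u v : vertex) : nn u v = nn v u.
Proof. by rewrite /nn distrC [`|u.2 - v.2|]distrC. Qed.

Lemma edge_of_sym (u v : vertex) : nn u v -> edge_of u v = edge_of v u.
Proof.
case: u v => [x y] [x' y']; rewrite /nn /edge_of /= => h.
case: ifP => E; rewrite eq_sym E.
  by move/eqP: E => ->; rewrite minC.
have ex : x = x' by move/negbT: E; lia.
by rewrite ex minC.
Qed.

Lemma path_last_all (T : eqType) (e : rel T) (P : pred T) x p :
  (forall a b, e a b -> P b) -> path e x p -> all P p.
Proof.
move=> H; elim: p x => [|b p IH] x //= /andP [h1 h2].
by rewrite (H _ _ h1) (IH _ h2).
Qed.

Section Cover.
Variables (R : realType) (Omega : Type) (omega : edge -> Omega -> R) (D : R).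

Lemma cover n w : (1 <= n)%N -> no_enclosing_half_circuit omega D n w ->
  exists q0 ds, [/\ q0 \in Rlist n, (isqrt n <= size ds)%N,
    (size ds < zW n * zW n)%N, all (fun d => d < 4)%N ds &
    uniq (zes q0 ds) && all (fun e => (0 <= e.1.2) && (D < omega e w)) (zes q0 ds)].
Proof.
move=> hn hw.
have hs := isqrt_spec n; have hle := isqrt_le n; have hpos := isqrt_pos hn.
set r := isqrt n in hs hle hpos *.
set m := (n - r)%N.
have mn : (m < n)%N by rewrite /m; lia.
pose opE (e : edge) := omega e w <= D.
pose stp (a b : vertex) := nn a b && opE (edge_of a b) && zS n m b.
pose lfoot (u : vertex) := (u.2 == 0) && (- n%:Z <= u.1) && (u.1 <= - m%:Z - 1).
pose c (v : vertex) := `[< exists u p, lfoot u /\ path stp u p /\ last u p = v >].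
have lfS : forall u, lfoot u -> zS n m u.
  by move=> [x y]; rewrite /lfoot /zS /= => h; lia.
have c_lf : forall u : vertex, u.2 = 0 -> (- n%:Z <= u.1) && (u.1 <= - m%:Z - 1) -> c u.
  move=> u h1 h2; apply/asboolP; exists u, [::]; split => //.
  by rewrite /lfoot h1 eqxx.
have c_op : forall u v, zS n m u -> zS n m v -> nn u v -> opE (edge_of u v) -> c u = c v.
  move=> u v zu zv huv ho; apply/idP/idP => /asboolP [u0 [p [h1 [h2 h3]]]];
    apply/asboolP.
    exists u0, (rcons p v); rewrite rcons_path last_rcons h3 h2 /stp huv ho zv.
    by [].
  exists u0, (rcons p u); rewrite rcons_path last_rcons h3 h2 /stp nn_sym huv.
  by rewrite -edge_of_sym // ho zu.
have c_rf : forall u : vertex, u.2 = 0 -> (m%:Z + 1 <= u.1) && (u.1 <= n%:Z) -> ~~ c u.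
  move=> u h1 h2; apply/negP => /asboolP [u0 [p [hl [hp hlast]]]].
  apply: hw; exists (u0 :: p).
  have allS : all (zS n m) (u0 :: p).
    rewrite /= lfS //=; apply: (path_last_all (e := stp)) hp.
    by move=> a b /andP [_ ->].
  have allA : all (@inA R n) (u0 :: p).
    by apply/allP => v hv; apply: zS_inA => //; move/allP: allS; apply.
  apply/andP; split.
    rewrite /open_half_circuit_in; apply/and5P; split.
    - apply/allP => v hv; move/allP: allS => /(_ v hv).
      by case: v {hv} => x y; rewrite /zS /=; lia.
    - by apply: sub_path hp => a b /andP [/andP [h h'] _]; apply/andP; split.
    - by move: hl; rewrite /lfoot => /andP [/andP [-> _] _].
    - by rewrite hlast h1.
    - exact: allA.
  rewrite /encloses_origin; apply/andP; split.
    apply/negP => h0; move/allP: allS => /(_ _ h0); rewrite /zS /=; lia.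
  apply/orP; left; rewrite hlast; move: hl; rewrite /lfoot; lia.
have [q0 [ds [h1 h2 h3 h4 h5]]] := comb_main mn c_lf c_rf c_op.
exists q0, ds; split => //.
  by move: h2; rewrite /m; have -> : (n - (n - r) = r)%N by lia.
move: h5 => /andP [-> h5]; apply: sub_all h5 => e /andP [-> /=].
by rewrite /opE -ltNge.
Qed.

End Cover.

Section Series.
Variable R : realType.
Let x : R := 4 / 5.

Definition fr (k : nat) : R := 20 * (k.+1%:R) ^+ 4 * (4 / 5) ^+ k.
Definition P2 (z : R) : R :=
  2 * z ^+ 5 + 49 * z ^+ 4 + 880 * z ^+ 3 + 1183 * 10 * z ^+ 2 + 10603 * 10 * z + (4751 * 100 + 65).
Lemma P2_id (z : R) : 5 * P2 z - 4 * P2 (z + 1) = (2 * z + 1) * (z + 1) ^+ 4.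
Proof. rewrite /P2. ring. Qed.
Definition Apoly (k : nat) : R := 100 * P2 k%:R.
Definition Aa (k : nat) : R := Apoly k * (4 / 5) ^+ k.

Lemma Aa_step k : Aa k - Aa k.+1 = (2 * k%:R + 1) * fr k.
Proof.
rewrite /Aa /Apoly /fr exprS -[(k.+1%:R : R)]natr1.
have e := P2_id (k%:R).
move: e; move: (P2 k%:R) (P2 (k%:R + 1)) (k%:R : R) ((4 / 5 : R) ^+ k) => a b z y e.
have -> : (2 * z + 1) * (20 * (z + 1) ^+ 4 * y) = 20 * y * ((2 * z + 1) * (z + 1) ^+ 4) by ring.
by rewrite -e; field.
Qed.

Ltac posi := repeat (exact: ler0n || assumption || apply: exprn_ge0 || apply: mulr_ge0
  || apply: addr_ge0 || apply: divr_ge0 || rewrite invr_ge0).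

Lemma Apoly_ge0 k : 0 <= Apoly k.
Proof. rewrite /Apoly /P2; have h : (0 : R) <= k%:R by apply: ler0n. posi. Qed.

Lemma fr_ge0 k : 0 <= fr k.
Proof. rewrite /fr; posi. Qed.

Lemma Aa_ge0 k : 0 <= Aa k.
Proof. rewrite /Aa; apply: mulr_ge0; [exact: Apoly_ge0 | posi]. Qed.

Definition Phi (n : nat) : R :=
  Aa (isqrt n).+1 + (((isqrt n).+1 * (isqrt n).+1 - n)%N)%:R * fr (isqrt n).

Lemma Phi_ge0 n : 0 <= Phi n.
Proof. rewrite /Phi; apply: addr_ge0; [exact: Aa_ge0 | apply: mulr_ge0; [exact: ler0n | exact: fr_ge0]]. Qed.

Lemma Phi_step n : Phi n - Phi n.+1 = fr (isqrt n).
Proof.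
have hs := isqrt_spec n.
rewrite /Phi /=; set r := isqrt n in hs *.
case: ifP => h.
  have -> : ((r.+1 * r.+1 - n)%N = 1)%N by lia.
  have -> : ((r.+2 * r.+2 - n.+1)%N = (2 * r.+1).+1)%N by nia.
  have E : (((2 * r.+1).+1)%N%:R : R) = 2 * r.+1%:R + 1 by rewrite -[in LHS]natr1 natrM.
  have := Aa_step r.+1; rewrite E.
  move: (Aa r.+1) (Aa r.+2) (fr r) (fr r.+1) (r.+1%:R : R) => a b f g z e.
  have -> : (1%:R : R) = 1 by []. 
  lra.
have -> : ((r.+1 * r.+1 - n)%N = ((r.+1 * r.+1 - n.+1).+1)%N) by lia.
set T := (r.+1 * r.+1 - n.+1)%N.
rewrite -[(T.+1%:R : R)]natr1.
move: (T%:R : R) (Aa r.+1) (fr r) => t a f; lra.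
Qed.

Lemma sum_fr N : \sum_(0 <= n < N) fr (isqrt n) = Phi 0 - Phi N.
Proof.
elim: N => [|N IH]; first by rewrite big_geq // subrr.
rewrite big_nat_recr //= IH -(Phi_step N); lra.
Qed.

Definition bb (n : nat) : R := ((zW n * zW n)%N)%:R * (5 * (4 / 5) ^+ isqrt n).

Lemma bb_le n : bb n <= fr (isqrt n).
Proof.
have hs := isqrt_spec n.
rewrite /bb /fr; set r := isqrt n in hs *.
have h : ((zW n * zW n)%N <= 4 * r.+1 ^ 4)%N by rewrite /zW; nia.
have h' : (((zW n * zW n)%N)%:R : R) <= 4 * r.+1%:R ^+ 4.
  have h'' : (((zW n * zW n)%N)%:R : R) <= ((4 * r.+1 ^ 4)%N)%:R by rewrite ler_nat.
  by rewrite [in X in _ <= X]natrM [in X in _ <= X]natrX in h''.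
have hy : (0 : R) <= (4 / 5) ^+ r by rewrite exprn_ge0 ?divr_ge0.
move: h' hy; move: (((zW n * zW n)%N)%:R : R) (r.+1%:R ^+ 4 : R) ((4 / 5 : R) ^+ r) => a b y.
move=> h1 h2; nra.
Qed.

Lemma sum_bb N : \sum_(0 <= n < N) bb n <= Phi 0.
Proof.
apply: le_trans (_ : \sum_(0 <= n < N) fr (isqrt n) <= _).
  by apply: ler_sum => n _; apply: bb_le.
by rewrite sum_fr lerBlDr lerDl Phi_ge0.
Qed.

End Series.

Local Open Scope classical_set_scope.

Lemma all_andb (T : Type) (p q : pred T) (s : seq T) :
  all (fun e => p e && q e) s = all p s && all q s.
Proof. by elim: s => //= e s ->; case: (p e); case: (q e); case: (all p s). Qed.

Lemma sum_const_seqR (R : realType) (I : Type) (s : seq I) (c : R) :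
  \sum_(i <- s) c = (size s)%:R * c.
Proof.
elim: s => [|x s IH]; first by rewrite big_nil mul0r.
by rewrite big_cons IH /= mulrS mulrDl mul1r.
Qed.

Lemma geom_iota (R : realType) (x : R) a k : 0 <= x -> x < 1 ->
  \sum_(L <- iota a k) x ^+ L <= x ^+ a / (1 - x).
Proof.
move=> h0 h1; elim: k a => [|k IH] a.
  by rewrite big_nil divr_ge0 ?exprn_ge0 // subr_ge0 ltW.
rewrite /= big_cons; apply: (@le_trans _ _ (x ^+ a + x ^+ a.+1 / (1 - x))).
  by rewrite lerD2l; exact: IH.
rewrite exprS le_eqVlt; apply/orP; left; apply/eqP.
have hx : 1 - x != 0 by rewrite subr_eq0 eq_sym (lt_eqF h1).
by field.
Qed.

Section Prob.
Context (d : measure_display) (Omega : measurableType d) (R : realType)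
  (P : probability Omega R) (omega : edge -> Omega -> R) (D : R).
Hypothesis mom : forall e, inEH e -> measurable_fun setT (omega e).
Hypothesis indep : mutually_independent P omega.
Hypothesis h5 : forall e, inEH e ->
  (P [set w | (D < omega e w)%R] <= (1 / 5 : R)%:E)%E.

Lemma bigI_all (pr : R -> bool) (s : seq edge) :
  [set w | all (fun e => pr (omega e w)) s] =
  \big[setI/setT]_(e <- s) (omega e @^-1` [set x | pr x]).
Proof.
elim: s => [|e s IH]; first by rewrite big_nil; apply/seteqP; split.
rewrite big_cons -IH; apply/seteqP; split => w /=.
  by move/andP.
by move=> [-> ->].
Qed.

Lemma all_meas (pr : R -> bool) (s : seq edge) :
  measurable [set x | pr x] -> all inEH s ->
  measurable [set w | all (fun e => pr (omega e w)) s].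
Proof.
move=> mB hs; rewrite bigI_all big_seq; apply: bigsetI_measurable => e he.
have hE : inEH e by move/allP: hs; apply.
by rewrite -[X in measurable X]setTI; apply: (mom hE) => //.
Qed.

Definition Gev (i : vertex * seq nat) : set Omega :=
  [set w | uniq (zes i.1 i.2) &&
    all (fun e => (0 <= e.1.2) && (D < omega e w)) (zes i.1 i.2)].

Lemma Gev_eq i : Gev i =
  if uniq (zes i.1 i.2) && all inEH (zes i.1 i.2) then
    [set w | all (fun e => D < omega e w) (zes i.1 i.2)] else set0.
Proof.
rewrite /Gev; case: ifP => H; apply/seteqP; split => w /=; rewrite all_andb.
- by case/and3P.
- by case/andP: H => -> ->.
- by case/and3P => hu ha _; move: H; rewrite hu ha.
- by [].
Qed.

Lemma measB : measurable [set x : R | D < x].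
Proof. by rewrite -set_itvoy; exact: measurable_itv. Qed.

Lemma Gev_meas i : measurable (Gev i).
Proof.
rewrite Gev_eq; case: ifP => [/andP [_ H]|_]; last exact: measurable0.
exact: (all_meas (pr := fun x => D < x)) measB H.
Qed.

Lemma prod_le (s : seq edge) : all inEH s ->
  (\prod_(e <- s) P (omega e @^-1` [set x | (D < x)%R]) <= ((1 / 5) ^+ size s)%:E)%E.
Proof.
elim: s => [|e s IH] /=; first by rewrite big_nil expr0.
move/andP => [he hs]; rewrite big_cons exprS EFinM.
apply: lee_pmul.
- exact: measure_ge0.
- by apply: prode_ge0 => ? _; exact: measure_ge0.
- exact: h5 he.
- exact: IH.
Qed.

Lemma size_zes q0 ds : size (zes q0 ds) = size ds.
Proof. by rewrite /zes size_pairmap size_scanl. Qed.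

Lemma Gev_prob i : (P (Gev i) <= ((1 / 5) ^+ size i.2)%:E)%E.
Proof.
rewrite Gev_eq; case: ifP => [/andP [hu H]|_]; last first.
  by rewrite measure0 lee_fin exprn_ge0 // divr_ge0.
rewrite (bigI_all (fun x => D < x)) indep //; last by move=> _; exact: measB.
by rewrite -(size_zes i.1 i.2); apply: prod_le.
Qed.

Lemma union_bound (I : eqType) (s : seq I) (F : I -> set Omega) (B : set Omega) :
  measurable B -> (forall i, measurable (F i)) ->
  (forall w, B w -> exists2 i, i \in s & F i w) ->
  (P B <= \sum_(i <- s) P (F i))%E.
Proof.
elim: s B => [|i s IH] B mB mF cov.
  have -> : B = set0 by apply/seteqP; split => w // /cov [].
  by rewrite measure0 big_nil.
rewrite big_cons.
have mB' : measurable (B `&` ~` F i) by apply: measurableI => //; apply: measurableC.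
apply: (@le_trans _ _ (P (F i `|` (B `&` ~` F i)))).
  apply: le_measure; rewrite ?inE //; first exact: measurableU.
  move=> w Bw; case: (pselect (F i w)) => h; [by left | by right].
apply: le_trans (measureU2 P (mF i) mB') _.
apply: leeD2l; apply: IH => // w [Bw nF].
have [j hj Fj] := cov w Bw; exists j => //.
rewrite inE in hj; case/orP: hj => [/eqP ej|//].
by case: nF; rewrite -ej.
Qed.

End Prob.

Lemma path_split (f : edge -> bool) (v : vertex) q :
  path (fun a b => nn a b && f (edge_of a b)) v q =
  path nn v q && all f (pairmap edge_of v q).
Proof.
elim: q v => //= b q IH v; rewrite IH.
by case: (nn v b); case: (f (edge_of v b)); case: (path nn b q).
Qed.

Lemma inEH_pairmap (v : vertex) q :
  all (fun u : vertex => 0 <= u.2) (v :: q) -> all inEH (pairmap edge_of v q).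
Proof.
elim: q v => [|b q IH] v //= /and3P [hv hb hq].
rewrite IH /= ?hb ?hq // andbT /inEH /edge_of.
by case: ifP => _ /=; lia.
Qed.

Section En.
Context (d : measure_display) (Omega : measurableType d) (R : realType)
  (omega : edge -> Omega -> R) (D : R).
Hypothesis mom : forall e, inEH e -> measurable_fun setT (omega e).

Lemma fixed_meas n (p : seq vertex) :
  measurable [set w | open_half_circuit_in (fun e => omega e w <= D) (@inA R n) p
      && encloses_origin p].
Proof.
case: p => [|v q].
  rewrite (_ : [set w | _] = set0); first exact: measurable0.
  by apply/seteqP; split => w.
have mB : measurable [set x : R | x <= D] by rewrite -set_itvNyc; exact: measurable_itv.
have ohc : forall w, open_half_circuit_in (fun e => omega e w <= D) (@inA R n) (v :: q) =
   [&& all (fun u : vertex => 0 <= u.2) (v :: q),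
       path nn v q && all (fun e => omega e w <= D) (pairmap edge_of v q), v.2 == 0,
       (last v q).2 == 0 & all (@inA R n) (v :: q)].
  by move=> w; rewrite -(path_split (fun e => omega e w <= D)).
case Hs: [&& all (fun u : vertex => 0 <= u.2) (v :: q), path nn v q, v.2 == 0,
   (last v q).2 == 0, all (@inA R n) (v :: q) & encloses_origin (v :: q)].
  move/and5P: (Hs) => [h1 h2 h3 h4 /andP [h5 h6]].
  have -> : [set w | open_half_circuit_in (fun e => omega e w <= D) (@inA R n) (v :: q)
      && encloses_origin (v :: q)] =
      [set w | all (fun e => omega e w <= D) (pairmap edge_of v q)].
    by apply/seteqP; split => w; rewrite /mkset; cbv beta; rewrite ohc h1 h2 h3 h4 h5 h6 /= ?andbT.
  apply: (all_meas mom mB).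
  exact: inEH_pairmap.
have -> : [set w | open_half_circuit_in (fun e => omega e w <= D) (@inA R n) (v :: q)
    && encloses_origin (v :: q)] = set0.
  apply/seteqP; split => w //; rewrite /mkset; cbv beta; rewrite ohc.
  case/andP => /and5P [a1 /andP [a2 _] a3 a4 a5] a6.
  by move: Hs; rewrite a1 a2 a3 a4 a5 a6.
exact: measurable0.
Qed.

Lemma En_meas n : measurable (no_enclosing_half_circuit omega D n).
Proof.
set b := fun w (p : seq vertex) =>
  open_half_circuit_in (fun e => omega e w <= D) (@inA R n) p && encloses_origin p.
have -> : no_enclosing_half_circuit omega D n =
   ~` (\bigcup_(k in setT) [set w | if unpickle k is Some p then b w p else false]).
  apply/seteqP; split => w.
    move=> H [k _]; rewrite /mkset; case E: (unpickle k) => [p|] // hb.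
    by apply: H; exists p.
  move=> H [p hp]; apply: H; exists (pickle p) => //.
  by rewrite /mkset pickleK.
apply: measurableC; apply: bigcup_measurable => k _.
case: (unpickle k) => [p|]; first exact: fixed_meas.
rewrite (_ : [set _ | _] = set0); first exact: measurable0.
by apply/seteqP; split.
Qed.

End En.

Definition alldirs (n : nat) : seq (seq nat) :=
  flatten [seq [seq map (@nat_of_ord 4) (tval t) | t <- enum {: L.-tuple 'I_4}]
          | L <- iota (isqrt n) (zW n * zW n - isqrt n)].

Lemma mem_alldirs n ds : (isqrt n <= size ds)%N -> (size ds < zW n * zW n)%N ->
  all (fun d => d < 4)%N ds -> ds \in alldirs n.
Proof.
move=> h1 h2 h3; apply/flatten_mapP; exists (size ds).
  by rewrite mem_iota; lia.
have hs : size (map (@inord 3) ds) == size ds by rewrite size_map.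
apply/mapP; exists (Tuple hs); first by rewrite mem_enum.
rewrite /= -map_comp; symmetry; apply: map_id_in => x hx /=.
by rewrite inordK //; move/allP: h3 => /(_ x hx).
Qed.

Lemma sum_alldirs (R : realType) n :
  \sum_(ds <- alldirs n) ((1 / 5 : R) ^+ size ds) <= 5 * (4 / 5) ^+ isqrt n.
Proof.
rewrite big_flatten /= big_map.
have E : forall L, \sum_(ds <- [seq map (@nat_of_ord 4) (tval t) | t <- enum {: L.-tuple 'I_4}])
    (1 / 5 : R) ^+ size ds = (4 / 5) ^+ L.
  move=> L; rewrite big_map.
  rewrite (eq_bigr (fun _ => (1 / 5 : R) ^+ L)); last by move=> t _; rewrite size_map size_tuple.
  rewrite sum_const_seqR -cardE card_tuple card_ord natrX -exprMn.
  by rewrite mul1r.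
under eq_bigr => L _ do rewrite E.
apply: le_trans (geom_iota _ _ _ _) _.
- by rewrite divr_ge0.
- by rewrite ltr_pdivrMr // mul1r ltr_nat.
by rewrite le_eqVlt; apply/orP; left; apply/eqP; field.
Qed.

Section Final.
Context (d : measure_display) (Omega : measurableType d) (R : realType)
  (P : probability Omega R) (omega : edge -> Omega -> R) (D : R).
Hypothesis mom : forall e, inEH e -> measurable_fun setT (omega e).
Hypothesis indep : mutually_independent P omega.
Hypothesis h5 : forall e, inEH e ->
  (P [set w | (D < omega e w)%R] <= (1 / 5 : R)%:E)%E.

Lemma PE_bound n : (1 <= n)%N ->
  (P (no_enclosing_half_circuit omega D n) <= (bb R n)%:E)%E.
Proof.
move=> hn.
pose idx := [seq (q0, ds) | q0 <- Rlist n, ds <- alldirs n].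
apply: le_trans (union_bound P (s := idx) (F := Gev omega D) (En_meas D mom n)
  (Gev_meas D mom) _) _.
  move=> w hw; have [q0 [ds [h1 h2 h3 h4 h5']]] := cover hn hw.
  exists (q0, ds); first by apply: allpairs_f => //; apply: mem_alldirs.
  exact: h5'.
apply: le_trans (@lee_sum _ _ _ _ idx xpredT (fun i _ => Gev_prob indep h5 i)) _.
rewrite sumEFin lee_fin big_allpairs /=.
rewrite sum_const_seqR size_Rlist /bb.
by apply: ler_wpM2l => //; exact: sum_alldirs.
Qed.

End Final.

Unset Implicit Arguments.
Unset Strict Implicit.

Theorem lemmaC5 (d : measure_display) (Omega : measurableType d)
  (R : realType) (P : probability Omega R) (omega : edge -> Omega -> R)
  (D : R) :
  (* each omega_e, e in E_H, is a [0,oo)-valued random variable *)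
  (forall e, inEH e -> measurable_fun setT (omega e)) ->
  (forall e w, inEH e -> 0 <= omega e w) ->
  (* independent *)
  mutually_independent P omega ->
  (* identically distributed *)
  (forall e e' (B : set R), inEH e -> inEH e' -> measurable B ->
     P (omega e @^-1` B) = P (omega e' @^-1` B)) ->
  (* continuous marginals *)
  (forall e (x : R), inEH e -> P (omega e @^-1` [set x]) = 0%E) ->
  0 < D ->
  (forall e, inEH e -> (P [set w | (D < omega e w)%R] <= (1 / 5 : R)%:E)%E) ->
  (\sum_(0 <= n <oo) P (no_enclosing_half_circuit omega D n) < +oo)%E.
Proof.
move=> mom _ indep _ _ _ h5.
have hP : forall n, (P (no_enclosing_half_circuit omega D n) <= (bb R n)%:E)%E.
  case=> [|n]; last exact: PE_bound.
  apply: le_trans (probability_le1 P (En_meas D mom 0)) _.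
  rewrite lee_fin /bb /= expr0 mulr1.
  by rewrite (_ : (4%:R : R) * 5 = 20%:R) ?ler1n // -natrM.
apply: (@le_lt_trans _ _ ((Phi R 0)%:E)); last exact: ltry.
apply: lime_le; first by apply: is_cvg_nneseries => k _ _; exact: measure_ge0.
apply: nearW => N.
apply: le_trans (@lee_sum _ _ _ _ _ xpredT (fun k _ => hP k)) _.
by rewrite sumEFin lee_fin; exact: sum_bb.
Qed.
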